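(* Assume (A1), (A2) and (A3), and let $\alpha>0$ be arbitrary. Along every trajectory of the algorithm described in the context, for all $k\ge0$, $$V_{\bar x}(k+1)-V_{\bar x}(k)\le-l\|\bm e_{\bar x}(k)\|^2+\beta_{\bar x\psi}\|\bm e_\psi(k)\|^2+\beta_{\bar x\xi}\|\bm e_\xi(k)\|^2+\alpha\max_ib_{1i}\big(\|\bm e_\psi(k)\|^2+\|\bm e_\xi(k)\|^2+N\|\bm e_{\bar x}(k)\|^2\big).$$
   Context: Game. $N$ coalitions; coalition $i$ has agents $i1,\dots,in_i$; $\mathcal V_i=\{i1,\dots,in_i\}$, $\mathcal V=\bigcup_i\mathcal V_i$, $n_{\mathrm{sum}}=\sum_in_i$; agents ordered lexicographically. Agent $ij$ has state $x_{ij}\in\mathbb{R}$; $\bm x_i=(x_{i1},\dots,x_{in_i})^T$, $\bm x=(\bm x_1^T,\dots,\bm x_N^T)^T$. Costs $f_{ij}:\mathbb{R}^{n_{\mathrm{sum}}}\to\mathbb{R}$, $f_i=\sum_jf_{ij}$. For $\bm y\in\mathbb{R}^N$, $g_i(\bm y)=f_i((y_1\mathbf 1_{n_1}^T,\dots,y_N\mathbf 1_{n_N}^T)^T)$, $\mathcal Q(\bm y)=(\partial g_i/\partial y_i(\bm y))_{i=1}^N$; $\bm y^*$ is the (unique) Nash equilibrium of the game $\min_{y_i}g_i(\bm y)$, $i=1,\dots,N$. Graph. Directed graph $\mathcal G=(\mathcal V,\mathcal E)$, $(pq,ij)\in\mathcal E$ meaning $ij$ receives from $pq$. $a_{ij}^{pq}=1$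 if $(pq,ij)\in\mathcal E$, $pq\ne ij$, else $0$; $d_{ij}=\sum_{pq}a_{ij}^{pq}$. $\mathcal G_i$: subgraph induced on $\mathcal V_i$. $\mathcal N_{ij}^{\mathrm{in}}$, $\mathcal N_{ij}^{i\text{-in}}$, $\mathcal N_{ij}^{i\text{-out}}$: in-neighbors in $\mathcal G$, in-neighbors and out-neighbors in $\mathcal G_i$. Assumptions. (A1) $\mathcal G$ and every $\mathcal G_i$ are strongly connected. (A2) each $f_{ij}$ is convex, $C^2$, with $\nabla f_{ij}$ Lipschitz of constant $l_{ij}$. (A3) $\exists l>0$: $(\bm a-\bm b)^T(\mathcal Q(\bm a)-\mathcal Q(\bm b))\ge l\|\bm a-\bm b\|^2$ for all $\bm a,\bm b\in\mathbb{R}^N$. Algorithm. Weights $r_{ij}^{im}>0$ for $im\in\mathcal N_{ij}^{i\text{-in}}\cup\{ij\}$ summing to 1, $c_{im}^{ij}>0$ for $im\in\mathcal N_{ij}^{i\text{-out}}\cup\{ij\}$ summing to 1, other within-coalition weights $0$; $R_i=[r_{ij}^{im}]$, $C_i=[c_{ij}^{im}]$ ($j$ row, $m$ column). Step size $\alpha>0$. Initialization: $x_{ij}(0),\bm\xi_{ij}(0)\in\mathbb{R}^{n_{\mathrm{sum}}}$ arbitrary, $\psi_{ij}^{il}(0)=\frac{\partial f_{ij}}{\partial x_{il}}(\bm\xi_{ij}(0))$. For $k\ge0$: $x_{ij}(k+1)=\sum_mr_{ij}^{im}x_{im}(k)-\frac{\alpha}{n_i}\sum_{m=1}^{n_i}\psi_{ij}^{im}(k)$;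 $\xi_{ij}^{pq}(k+1)=\xi_{ij}^{pq}(k)-\frac1{d_{ij}+a_{ij}^{pq}}\big(\sum_{lm\in\mathcal N_{ij}^{\mathrm{in}}}(\xi_{ij}^{pq}(k)-\xi_{lm}^{pq}(k))+a_{ij}^{pq}(\xi_{ij}^{pq}(k)-x_{pq}(k))\big)$ for all $pq\in\mathcal V$; $\psi_{ij}^{il}(k+1)=\sum_mc_{ij}^{im}\psi_{im}^{il}(k)+\frac{\partial f_{ij}}{\partial x_{il}}(\bm\xi_{ij}(k+1))-\frac{\partial f_{ij}}{\partial x_{il}}(\bm\xi_{ij}(k))$. Auxiliary quantities. $u_i$: $u_i^TR_i=u_i^T$, $u_i^T\mathbf 1_{n_i}=n_i$; $v_i$: $C_iv_i=v_i$, $\mathbf 1_{n_i}^Tv_i=n_i$. Constants: $\beta_{\bar x\psi}=\frac2l\max_i\frac{n_i^3\|u_i\|^2}{(u_i^Tv_i)^2}$, $\beta_{\bar x\xi}=\frac2l\max_i\{n_i\sum_{j=1}^{n_i}l_{ij}^2\}$, $b_{0i}=n_i+(\frac1{n_i}+\max_kn_k)\|v_i\|^2\sum_{j=1}^{n_i}l_{ij}^2$, $b_{1i}=\frac{\|u_i\|^2}{n_iu_i^Tv_i}b_{0i}$. Errors and Lyapunov function. $\bm\psi_i=(\psi_{i1}^{i1},\dots,\psi_{i1}^{in_i},\psi_{i2}^{i1},\dots,\psi_{in_i}^{in_i})^T$, $\bar{\bm\psi}_i=\frac1{n_i}(\mathbf 1_{n_i}^T\otimes I_{n_i})\bm\psi_i$,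 $\bm e_{\psi_i}=\bm\psi_i-v_i\otimes\bar{\bm\psi}_i$. $\bar x_i=u_i^T\bm x_i/n_i$, $e_{\bar x_i}=\bar x_i-y_i^*$, $\bar{\bm X}=(\bar x_1\mathbf 1_{n_1}^T,\dots,\bar x_N\mathbf 1_{n_N}^T)^T$. $\bm\xi_i=(\bm\xi_{i1}^T,\dots,\bm\xi_{in_i}^T)^T$, $\bm e_{\xi_i}=\bm\xi_i-\mathbf 1_{n_i}\otimes\bar{\bm X}$. $\bm e_\psi,\bm e_{\bar x},\bm e_\xi$: stacks over $i$. $V_{\bar x}(k)=\sum_{i=1}^N\frac{n_i^3}{\alpha u_i^Tv_i}e_{\bar x_i}(k)^2$. *)

(* Defs.v *)
From HB Require Import structures.
From mathcomp Require Import all_boot all_order all_algebra.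
From mathcomp Require Import boolp classical_sets reals topology normedtype derive.
Set Implicit Arguments. Unset Strict Implicit. Unset Printing Implicit Defensive.
Import Order.TTheory GRing.Theory Num.Theory.
Local Open Scope ring_scope.

Notation agent N n := {i : 'I_N & 'I_(n i)}.

Definition ag (N : nat) (n : 'I_N -> nat) (i : 'I_N) (j : 'I_(n i)) : agent N n :=
  existT (fun i => 'I_(n i)) i j.
Arguments ag {N n} i j.

Section Defs.
Context {R : realType}.

Definition pline (T : eqType) (F : (T -> R) -> R) (p : T) (x : T -> R) : R^o -> R^o :=
  fun h => F (fun q => x q + (if q == p then h else 0)).
Definition partial (T : eqType) (F : (T -> R) -> R) (p : T) (x : T -> R) : R :=
  derive1 (pline F p x) 0.
Definition has_partial (T : eqType) (F : (T -> R) -> R) (p : T) (x : T -> R) : Prop :=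
  derivable (pline F p x) 0 1.

Definition sqnorm (T : finType) (x : T -> R) : R := \sum_(p : T) x p ^+ 2.

Definition fcontinuous (T : finType) (G : (T -> R) -> R) : Prop :=
  forall x (e : R), 0 < e -> exists2 d : R, 0 < d &
    forall y, sqnorm (fun p => y p - x p) < d ^+ 2 -> `|G y - G x| < e.

Definition C2 (T : finType) (F : (T -> R) -> R) : Prop :=
  [/\ fcontinuous F,
      forall p x, has_partial F p x,
      forall p, fcontinuous (partial F p),
      forall p q x, has_partial (partial F p) q x &
      forall p q, fcontinuous (partial (partial F p) q)].

Definition convex_fun (T : finType) (F : (T -> R) -> R) : Prop :=
  forall (a b : T -> R) (t : R), 0 <= t <= 1 ->
    F (fun p => t * a p + (1 - t) * b p) <= t * F a + (1 - t) * F b.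

Definition grad_lipschitz (T : finType) (F : (T -> R) -> R) (L : R) : Prop :=
  forall a b : T -> R,
    Num.sqrt (sqnorm (fun p => partial F p a - partial F p b))
      <= L * Num.sqrt (sqnorm (fun p => a p - b p)).

Variables (N : nat) (n : 'I_N -> nat).

(* g_i(y) = f_i(y_1 1^T, ..., y_N 1^T), f_i = sum_j f_ij *)
Definition gcost (f : agent N n -> (agent N n -> R) -> R) (i : 'I_N) (y : 'I_N -> R) : R :=
  \sum_(j < n i) f (ag i j) (fun a => y (tag a)).

Definition Qmap (f : agent N n -> (agent N n -> R) -> R) (y : 'I_N -> R) (i : 'I_N) : R :=
  partial (gcost f i) i y.

Definition nash_eq (f : agent N n -> (agent N n -> R) -> R) (ys : 'I_N -> R) : Prop :=
  forall (i : 'I_N) (z : R),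
    gcost f i ys <= gcost f i (fun k => if k == i then z else ys k).

Definition strongly_connected (T : finType) (e : rel T) : Prop :=
  forall a b : T, connect e a b.

(* a_{ij}^{pq}: E p a means "a receives from p". *)
Definition adj (E : rel (agent N n)) (a p : agent N n) : R :=
  ((E p a) && (p != a))%:R.
Definition indeg (E : rel (agent N n)) (a : agent N n) : R := \sum_p adj E a p.

(* Trajectory of the algorithm. x k a = x_a(k); xi k a p = xi_a^p(k);
   psi k (ij) l = psi_{ij}^{il}(k). *)
Definition trajectory (E : rel (agent N n)) (f : agent N n -> (agent N n -> R) -> R)
  (Rm Cm : forall i : 'I_N, 'M[R]_(n i)) (alpha : R)
  (x : nat -> agent N n -> R) (xi : nat -> agent N n -> agent N n -> R)
  (psi : nat -> forall a : agent N n, 'I_(n (tag a)) -> R) : Prop :=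
  [/\ (forall a l, psi 0%N a l = partial (f a) (ag (tag a) l) (xi 0%N a)),
      (forall k a, x k.+1 a =
         \sum_(m < n (tag a)) Rm (tag a) (tagged a) m * x k (ag (tag a) m)
         - alpha / (n (tag a))%:R * \sum_(m < n (tag a)) psi k a m),
      (forall k a p, xi k.+1 a p =
         xi k a p - (indeg E a + adj E a p)^-1 *
           (\sum_(b : agent N n) adj E a b * (xi k a p - xi k b p)
            + adj E a p * (xi k a p - x k p))) &
      (forall k a l, psi k.+1 a l =
         \sum_(m < n (tag a)) Cm (tag a) (tagged a) m * psi k (ag (tag a) m) l
         + partial (f a) (ag (tag a) l) (xi k.+1 a)
         - partial (f a) (ag (tag a) l) (xi k a))].

Definition xbar (u : forall i : 'I_N, 'rV[R]_(n i)) (x : agent N n -> R) (i : 'I_N) : R :=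
  (\sum_(j < n i) u i 0 j * x (ag i j)) / (n i)%:R.

Definition e_xbar_sq (u : forall i : 'I_N, 'rV[R]_(n i)) (ys : 'I_N -> R)
  (x : agent N n -> R) : R :=
  \sum_(i < N) (xbar u x i - ys i) ^+ 2.

Definition e_xi_sq (u : forall i : 'I_N, 'rV[R]_(n i)) (x : agent N n -> R)
  (xi : agent N n -> agent N n -> R) : R :=
  \sum_(a : agent N n) \sum_(p : agent N n) (xi a p - xbar u x (tag p)) ^+ 2.

Definition psibar (psi : forall a : agent N n, 'I_(n (tag a)) -> R) (i : 'I_N) (l : 'I_(n i)) : R :=
  (n i)%:R^-1 * \sum_(j < n i) psi (ag i j) l.

Definition e_psi_sq (v : forall i : 'I_N, 'cV[R]_(n i))
  (psi : forall a : agent N n, 'I_(n (tag a)) -> R) : R :=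
  \sum_(i < N) \sum_(j < n i) \sum_(l < n i)
     (psi (ag i j) l - v i j 0 * psibar psi l) ^+ 2.

Definition uv (u : forall i : 'I_N, 'rV[R]_(n i)) (v : forall i : 'I_N, 'cV[R]_(n i))
  (i : 'I_N) : R := (u i *m v i) 0 0.

Definition Vxbar (u : forall i : 'I_N, 'rV[R]_(n i)) (v : forall i : 'I_N, 'cV[R]_(n i))
  (alpha : R) (ys : 'I_N -> R) (x : agent N n -> R) : R :=
  \sum_(i < N) ((n i)%:R ^+ 3 / (alpha * uv u v i)) * (xbar u x i - ys i) ^+ 2.

Definition rnorm_sq m (w : 'rV[R]_m) : R := \sum_(j < m) w 0 j ^+ 2.
Definition cnorm_sq m (w : 'cV[R]_m) : R := \sum_(j < m) w j 0 ^+ 2.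
Definition sumlip2 (lip : agent N n -> R) (i : 'I_N) : R :=
  \sum_(j < n i) lip (ag i j) ^+ 2.

Definition beta_xpsi (l : R) (u : forall i : 'I_N, 'rV[R]_(n i))
  (v : forall i : 'I_N, 'cV[R]_(n i)) : R :=
  2 / l * \big[Num.max/0]_(i < N)
     ((n i)%:R ^+ 3 * rnorm_sq (u i) / (uv u v i) ^+ 2).

Definition beta_xxi (l : R) (lip : agent N n -> R) : R :=
  2 / l * \big[Num.max/0]_(i < N) ((n i)%:R * sumlip2 lip i).

Definition b0 (v : forall i : 'I_N, 'cV[R]_(n i)) (lip : agent N n -> R) (i : 'I_N) : R :=
  (n i)%:R + ((n i)%:R^-1 + (\max_(k < N) n k)%:R) * cnorm_sq (v i) * sumlip2 lip i.

Definition b1 (u : forall i : 'I_N, 'rV[R]_(n i)) (v : forall i : 'I_N, 'cV[R]_(n i))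
  (lip : agent N n -> R) (i : 'I_N) : R :=
  rnorm_sq (u i) / ((n i)%:R * uv u v i) * b0 v lip i.

End Defs.

(* Main.v *)
Require Import Defs.
From HB Require Import structures.
From mathcomp Require Import all_boot all_order all_algebra.
From mathcomp Require Import boolp classical_sets reals topology normedtype derive.
Import Order.TTheory GRing.Theory Num.Theory.

From mathcomp Require Import ring lra.

Module Helpers.
Import numFieldNormedType.Exports.
Set Implicit Arguments. Unset Strict Implicit. Unset Printing Implicit Defensive.
Local Open Scope classical_set_scope.
Local Open Scope ring_scope.

Section An.
Context {R : realType}.

Definition ED (phi : R -> R) (D : R) := forall e : R, 0 < e ->
  exists2 d : R, 0 < d & forall h, `|h| < d -> `|phi h - phi 0 - h * D| <= e * `|h|.

Lemma ED_is_derive (phi : R^o -> R^o) D : ED phi D -> is_derive (0:R^o) (1:R^o) phi D.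
Proof.
move=> H.
have C : (fun h : R^o => h^-1 *: ((phi \o shift 0) (h *: (1:R^o)) - phi 0)) @ (0:R^o)^' --> (D:R^o).
  apply/cvgrPdist_le => e e0.
  have [d d0 Hd] := H e e0.
  exists d => //= h hd hne0.
  have {}hd : `|h| < d by move: hd; rewrite /ball_ /= sub0r normrN.
  rewrite addr0 /GRing.scale /= mulr1.
  have hn : 0 < `|h| by rewrite normr_gt0.
  have := Hd h hd.
  have -> : D - h^-1 * (phi h - phi 0) = h^-1 * (h * D - (phi h - phi 0)).
    by field.
  rewrite normrM normfV ler_pdivrMl // distrC [e * _]mulrC; exact.
by apply: DeriveDef; [apply/cvg_ex; exists D | apply: cvg_lim].
Qed.

Lemma sq_le_of_norm (u v : R) : `|u| <= v -> u ^+ 2 <= v ^+ 2.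
Proof.
move=> H; rewrite -real_normK ?num_real //.
by rewrite !expr2; apply: ler_pM => //; apply: normr_ge0.
Qed.

Lemma derivable_shift (g : R^o -> R^o) (t : R) :
  derivable (fun h : R^o => g (h + t)) 0 1 ->
  derivable g t 1 /\ 'D_1 g t = 'D_1 (fun h : R^o => g (h + t)) 0.
Proof.
rewrite /derivable /derive.
have -> : (fun h : R^o => h^-1 *: (((fun h0 : R^o => g (h0 + t)) \o shift 0) (h *: (1:R^o)) - g (0 + t)))
  = (fun h : R^o => h^-1 *: ((g \o shift t) (h *: (1:R^o)) - g t)).
  by apply: funext => h; rewrite /= addr0 add0r.
done.
Qed.

Lemma ED_add (phi1 phi2 : R -> R) D1 D2 : ED phi1 D1 -> ED phi2 D2 ->
  ED (fun h => phi1 h + phi2 h) (D1 + D2).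
Proof.
move=> H1 H2 e e0.
have e2 : 0 < e / 2 by rewrite divr_gt0.
have [d1 d1p K1] := H1 _ e2; have [d2 d2p K2] := H2 _ e2.
exists (Num.min d1 d2); first by rewrite lt_min d1p.
move=> h; rewrite lt_min => /andP[h1 h2].
have := K1 h h1; have := K2 h h2.
have -> : phi1 h + phi2 h - (phi1 0 + phi2 0) - h * (D1 + D2) =
  (phi1 h - phi1 0 - h * D1) + (phi2 h - phi2 0 - h * D2) by ring.
move=> a b; apply: (le_trans (ler_normD _ _)); lra.
Qed.

Lemma ED_sum m (phi : 'I_m -> R -> R) (D : 'I_m -> R) :
  (forall j, ED (phi j) (D j)) -> ED (fun h => \sum_(j < m) phi j h) (\sum_(j < m) D j).
Proof.
elim: m phi D => [|m IH] phi D H.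
  move=> e e0; exists 1 => // h _; rewrite !big_ord0 mulr0 !subrr normr0.
  by rewrite mulr_ge0 // ltW.
have -> : (fun h => \sum_(j < m.+1) phi j h) =
  (fun h => \sum_(j < m) phi (widen_ord (leqnSn m) j) h + phi ord_max h).
  by apply: funext => h; rewrite big_ord_recr.
rewrite big_ord_recr /=; apply: ED_add => //.
exact: (IH (fun j => phi (widen_ord (leqnSn m) j)) (fun j => D (widen_ord (leqnSn m) j))).
Qed.

Lemma ED_min (phi : R -> R) D : ED phi D -> (forall h, phi 0 <= phi h) -> D = 0.
Proof.
move=> H hm; apply/eqP; apply/negP => /negP Dn.
have Dp : 0 < `|D| / 2 by rewrite divr_gt0 // normr_gt0.
have [d dp Hd] := H _ Dp.
have hm1 := hm (d / 2); have hm2 := hm (- (d / 2)).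
have n1 : `|d / 2| < d by rewrite gtr0_norm ?divr_gt0 //; lra.
have n2 : `|- (d / 2)| < d by rewrite normrN.
have a := Hd _ n1; have b := Hd _ n2; rewrite normrN in b.
have dd0 : 0 < d / 2 by rewrite divr_gt0.
rewrite (gtr0_norm dd0) in a b; move: a b.
rewrite !ler_norml => /andP [a1 a2] /andP [b1 b2].
case: (ltgtP D 0) => [Dl|Dg|De]; last by rewrite De eqxx in Dn.
  rewrite ltr0_norm // in a1 a2 b1 b2; nra.
rewrite gtr0_norm // in a1 a2 b1 b2; nra.
Qed.

Variable T : finType.

Definition upd (z : T -> R) (p : T) (c : R) : T -> R :=
  fun q => z q + (if q == p then c else 0).

Lemma pline_upd (F : (T -> R) -> R) p z c :
  pline F p (upd z p c) = (fun h : R^o => pline F p z (h + c)).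
Proof.
apply: funext => h; rewrite /pline /upd; congr F; apply: funext => q.
by case: (q == p); rewrite ?addr0 // [h + c]addrC addrA.
Qed.

Lemma pline0 (F : (T -> R) -> R) p z : pline F p z 0 = F z.
Proof. by rewrite /pline; congr F; apply: funext => q; rewrite if_same addr0. Qed.

Lemma pline_is_derive (F : (T -> R) -> R) p (z : T -> R) t :
  (forall y, has_partial F p y) ->
  is_derive (t:R) (1:R) (pline F p z : R -> R) (partial F p (upd z p t)).
Proof.
move=> hp; have := hp (upd z p t); rewrite /has_partial pline_upd => /derivable_shift [H1 H2].
apply: DeriveDef => //; rewrite H2 /partial derive1E pline_upd //.
Qed.

Lemma mvt_step (F : (T -> R) -> R) p (z : T -> R) h :
  (forall y, has_partial F p y) ->
  exists2 c : R, `|c| <= `|h| &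
    F (upd z p h) - F z = h * partial F p (upd z p c).
Proof.
move=> hp.
have dv : forall t, derivable (pline F p z) t 1.
  by move=> t; have [] := pline_is_derive z t hp.
have ct : forall a b : R, {within `[a, b], continuous (pline F p z)}.
  by move=> a b; apply: derivable_within_continuous => t _; exact: dv.
have E : F (upd z p h) = pline F p z h by [].
case: (ltgtP h 0) => [hlt|hgt|->].
- have [c cI Hc] := MVT hlt (fun t _ => pline_is_derive z t hp) (ct h 0).
  exists c.
    move: cI; rewrite in_itv /= => /andP[a b].
    rewrite (ltr0_norm hlt) ltr0_norm; lra.
  by rewrite E -(pline0 F p z); lra.
- have [c cI Hc] := MVT hgt (fun t _ => pline_is_derive z t hp) (ct 0 h).
  exists c.
    move: cI; rewrite in_itv /= => /andP[a b].
    rewrite (gtr0_norm hgt) gtr0_norm; lra.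
  by rewrite E -(pline0 F p z); lra.
- exists 0; first by rewrite normr0.
  rewrite mul0r; apply/eqP; rewrite subr_eq0 -(pline0 F p z); exact/eqP.
Qed.

Definition cnt (s : seq T) (q : T) : R := (count_mem q s)%:R.

Lemma cnt_ge0 s q : 0 <= cnt s q. Proof. exact: ler0n. Qed.

Lemma dirED (F : (T -> R) -> R) (s : seq T) (x : T -> R) :
  (forall p y, has_partial F p y) -> (forall p, fcontinuous (partial F p)) ->
  ED (fun h => F (fun q => x q + h * cnt s q)) (\sum_(p <- s) partial F p x).
Proof.
move=> hp hc.
have E0 : forall g : T -> R, (fun q => x q + 0 * g q) = x.
  by move=> g; apply: funext => q; rewrite mul0r addr0.
elim: s => [|p s IH] e e0.
  exists 1 => // h _ /=; rewrite E0.
  have -> : (fun q => x q + h * cnt [::] q) = x.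
    by apply: funext => q; rewrite /cnt /= mulr0 addr0.
  by rewrite big_nil mulr0 !subrr normr0 mulr_ge0 // ltW.
have e2 : 0 < e / 2 by rewrite divr_gt0.
have [d1 d1p H1] := IH (e / 2) e2.
have [d2 d2p H2] := hc p x (e / 2) e2.
set K := sqnorm (cnt (p :: s)).
have K0 : 0 <= K by apply: sumr_ge0 => q _; apply: sqr_ge0.
exists (Num.min d1 (d2 / (K + 1))).
  by rewrite lt_min d1p divr_gt0 //; lra.
move=> h; rewrite lt_min => /andP[hd1 hd2] /=.
set z := fun q => x q + h * cnt s q.
have Ez : (fun q => x q + h * cnt (p :: s) q) = upd z p h.
  apply: funext => q; rewrite /upd /z /cnt /= natrD mulrDr.
  have [->|ne] := eqVneq q p; first by rewrite mulr1; ring.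
  by rewrite mulr0 add0r addr0.
rewrite Ez E0 big_cons.
have [c hc' Hc] := mvt_step z h (hp p).
have := H1 h hd1; rewrite /= E0 -/z => Hz.
have Hd : sqnorm (fun q => upd z p c q - x q) < d2 ^+ 2.
  apply: (@le_lt_trans _ _ (h ^+ 2 * K)).
    rewrite /K /sqnorm mulr_sumr; apply: ler_sum => q _.
    rewrite -(real_normK (num_real h)) -exprMn; apply: sq_le_of_norm.
    have -> : upd z p c q - x q = h * cnt s q + (if q == p then c else 0).
      by rewrite /upd /z; ring.
    rewrite /cnt /= natrD mulrDr.
    apply: (le_trans (ler_normD _ _)); rewrite normrM normr_nat addrC.
    have [->|ne] := eqVneq q p; first by rewrite mulr1; apply: lerD.
    by rewrite /= mulr0 normr0 add0r.
  have hK : `|h| * (K + 1) < d2 by rewrite -ltr_pdivlMr //; lra.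
  have h0 := normr_ge0 h.
  rewrite -real_normK ?num_real //.
  have hK0 : 0 <= `|h| * (K + 1) by apply: mulr_ge0 => //; lra.
  have a1 : (`|h| * (K + 1)) ^+ 2 < d2 ^+ 2.
    by rewrite !expr2; apply: ltr_pM.
  have a2 : `|h| ^+ 2 * K <= (`|h| * (K + 1)) ^+ 2.

  have hh : 0 <= `|h| ^+ 2 by apply: sqr_ge0.
  rewrite exprMn -subr_ge0 -mulrBr; apply: mulr_ge0 => //; nra.
  exact: le_lt_trans a2 a1.
have := H2 _ Hd => Hp.
have -> : F (upd z p h) - F x - h * (partial F p x + \sum_(j <- s) partial F j x)
  = h * (partial F p (upd z p c) - partial F p x) + (F z - F x - h * \sum_(j <- s) partial F j x).
  by rewrite mulrBr -Hc; ring.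
apply: (le_trans (ler_normD _ _)); rewrite normrM.
have h0 := normr_ge0 h.
have : `|h| * `|partial F p (upd z p c) - partial F p x| <= `|h| * (e / 2).
  by rewrite ler_wpM2l // ltW.
lra.
Qed.

End An.

Section Grad.
Context {R : realType} (N : nat) (n : 'I_N -> nat).
Local Notation agt := (agent N n).

Lemma ag_inj i (a b : 'I_(n i)) : (ag i a == ag i b :> agt) = (a == b).
Proof.
apply/eqP/eqP => [H|->//].
have := congr1 (tagged_as (ag i a : agt)) H.
by rewrite !tagged_asE.
Qed.

Definition blk i : seq agt := [seq ag i l | l <- enum 'I_(n i)].

Lemma count_blk i (a : agt) : count_mem a (blk i) = (tag a == i).
Proof.
rewrite /blk count_map; case: a => j l /=.
have [e|ne] := eqVneq j i.
  subst j; rewrite (eq_count (a2 := pred1 l)); last by move=> l'; rewrite /= ag_inj.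
  by rewrite count_uniq_mem ?enum_uniq // mem_enum.
apply/eqP; rewrite -leqn0 leqNgt -has_count; apply/hasP => -[l' _ /= /eqP H].
by have := congr1 tag H => /= E; rewrite E eqxx in ne.
Qed.

Lemma sum_blk i (F : agt -> R) : \sum_(p <- blk i) F p = \sum_(l < n i) F (ag i l).
Proof. by rewrite /blk big_map big_enum. Qed.

Lemma gcost_ED (f : agt -> (agt -> R) -> R) (y : 'I_N -> R) i :
  (forall a p y, has_partial (f a) p y) -> (forall a p, fcontinuous (partial (f a) p)) ->
  ED (pline (gcost f i) i y)
     (\sum_(j < n i) \sum_(l < n i) partial (f (ag i j)) (ag i l) (fun a => y (tag a))).
Proof.
move=> hp hc.
have -> : pline (gcost f i) i y = (fun h => \sum_(j < n i)
   (fun h => f (ag i j) (fun q => y (tag q) + h * cnt (blk i) q)) h).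
  apply: funext => h; rewrite /pline /gcost; apply: eq_bigr => j _; congr (f _).
  apply: funext => a; rewrite /cnt count_blk.
  by case: (tag a == i); rewrite ?mulr1 ?mulr0.
apply: ED_sum => j; rewrite -(sum_blk i (fun p => partial (f (ag i j)) p (fun a => y (tag a)))); exact: dirED.
Qed.

Lemma Qmap_val (f : agt -> (agt -> R) -> R) (y : 'I_N -> R) i :
  (forall a p y, has_partial (f a) p y) -> (forall a p, fcontinuous (partial (f a) p)) ->
  Qmap f y i = \sum_(j < n i) \sum_(l < n i) partial (f (ag i j)) (ag i l) (fun a => y (tag a)).
Proof.
move=> hp hc; have H := ED_is_derive (gcost_ED y i hp hc).
by rewrite /Qmap /partial derive1E; apply: derive_val.
Qed.

Lemma Qmap_nash (f : agt -> (agt -> R) -> R) (ys : 'I_N -> R) i :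
  (forall a p y, has_partial (f a) p y) -> (forall a p, fcontinuous (partial (f a) p)) ->
  nash_eq f ys -> Qmap f ys i = 0.
Proof.
move=> hp hc hn; rewrite Qmap_val //.
apply: (ED_min (gcost_ED ys i hp hc)) => h.
have -> : pline (gcost f i) i ys 0 = gcost f i ys.
  by rewrite /pline; congr (gcost f i); apply: funext => q; rewrite if_same addr0.
have -> : pline (gcost f i) i ys h = gcost f i (fun k => if k == i then ys i + h else ys k).
  rewrite /pline; congr (gcost f i); apply: funext => q.
  by case: eqVneq => [->|]; rewrite ?addr0.
exact: hn.
Qed.

End Grad.

Section Ineq.
Context {R : realType}.

Lemma cs (I : finType) (a b : I -> R) :
  (\sum_i a i * b i) ^+ 2 <= (\sum_i a i ^+ 2) * (\sum_i b i ^+ 2).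
Proof.
set A := \sum_i a i ^+ 2; set B := \sum_i b i ^+ 2; set C := \sum_i a i * b i.
have B0 : 0 <= B by apply: sumr_ge0 => i _; apply: sqr_ge0.
have A0 : 0 <= A by apply: sumr_ge0 => i _; apply: sqr_ge0.
have [Bz|Bp] := eqVneq B 0.
  have bz : forall i, b i = 0.
    move=> i; apply/eqP; rewrite -sqrf_eq0; apply/eqP.
    move/eqP: Bz; rewrite /B psumr_eq0 => [/allP H|i' _]; last exact: sqr_ge0.
    by apply/eqP; apply: H; rewrite mem_index_enum.
  have -> : C = 0 by rewrite /C big1 // => i _; rewrite bz mulr0.
  by rewrite expr0n /= mulr_ge0.
have Bpos : 0 < B by rewrite lt_def Bp B0.
set t := C / B.
have E : \sum_i (a i - t * b i) ^+ 2 = A - 2 * t * C + t ^+ 2 * B.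
  rewrite /A /B /C mulr_sumr mulr_sumr -sumrB -big_split /=.
  by apply: eq_bigr => i _; ring.
have : 0 <= A - 2 * t * C + t ^+ 2 * B.
  by rewrite -E; apply: sumr_ge0 => i _; apply: sqr_ge0.
have -> : A - 2 * t * C + t ^+ 2 * B = A - C ^+ 2 / B.
  by rewrite /t; field; rewrite Bp.
rewrite subr_ge0 ler_pdivrMr // => H; rewrite mulrC; exact: H.
Qed.

Lemma sq_sum_le m (d : 'I_m -> R) : (\sum_(j < m) d j) ^+ 2 <= m%:R * \sum_(j < m) d j ^+ 2.
Proof.
have := cs (fun _ => 1) d.
have -> : \sum_(j < m) (fun _ => 1) j * d j = \sum_(j < m) d j.
  by apply: eq_bigr => j _; rewrite mul1r.
have -> : \sum_(j < m) (fun _ : 'I_m => (1:R)) j ^+ 2 = m%:R.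
  by rewrite (eq_bigr (fun _ => 1)) ?sumr_const ?card_ord // => j _; rewrite expr1n.
done.
Qed.

Lemma cs_gen (I : finType) (D a b : I -> R) :
  (forall j, 0 <= b j) -> (forall j, D j ^+ 2 <= a j ^+ 2 * b j) ->
  (\sum_j D j) ^+ 2 <= (\sum_j a j ^+ 2) * (\sum_j b j).
Proof.
move=> b0 H.
have H1 : forall j, `|D j| <= `|a j| * Num.sqrt (b j).
  move=> j; rewrite -(sqrtr_sqr (D j)) -(sqrtr_sqr (a j)) -sqrtrM ?sqr_ge0 //.
  by rewrite ler_sqrt // mulr_ge0 ?sqr_ge0.
apply: (le_trans (y := (\sum_j `|a j| * Num.sqrt (b j)) ^+ 2)).
  apply: sq_le_of_norm; apply: (le_trans (ler_norm_sum _ _ _)).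
  by apply: ler_sum => j _; apply: H1.
apply: (le_trans (cs _ _)); apply: ler_pM.
- by apply: sumr_ge0 => j _; apply: sqr_ge0.
- by apply: sumr_ge0 => j _; apply: sqr_ge0.
- by apply: ler_sum => j _; rewrite real_normK ?num_real.
- by apply: ler_sum => j _; rewrite sqr_sqrtr.
Qed.

Lemma comb (a b P Q X Y : R) : 0 <= P -> 0 <= Q -> 0 <= X -> 0 <= Y ->
  a ^+ 2 <= P * X -> b ^+ 2 <= Q * Y -> (a + b) ^+ 2 <= (P + Q) * (X + Y).
Proof.
move=> P0 Q0 X0 Y0 ha hb.
have h1 : (2 * a * b) ^+ 2 <= (Q * X + P * Y) ^+ 2.
  have : (2 * a * b) ^+ 2 <= 4 * (P * X) * (Q * Y).
    have H := ler_pM (sqr_ge0 a) (sqr_ge0 b) ha hb.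
    have -> : (2 * a * b) ^+ 2 = 4 * (a ^+ 2 * b ^+ 2) by ring.
    rewrite -mulrA; lra.
  move=> H; apply: (le_trans H).
  have : 0 <= (Q * X - P * Y) ^+ 2 by apply: sqr_ge0.
  rewrite !expr2; nra.
have h2 : 2 * a * b <= Q * X + P * Y.
  have := ler_norm (2 * a * b); move: h1.
  rewrite -[(2*a*b)^+2]real_normK ?num_real // ler_sqr ?nnegrE ?normr_ge0 //; last first.
    by rewrite addr_ge0 // mulr_ge0.
  move=> h h'; exact: le_trans h' h.
have -> : (a + b) ^+ 2 = a ^+ 2 + b ^+ 2 + 2 * a * b by ring.
have -> : (P + Q) * (X + Y) = P * X + Q * Y + (Q * X + P * Y) by ring.
by apply: lerD => //; apply: lerD.
Qed.

Lemma young (e d l : R) : 0 < l -> - 2 * e * d <= l / 2 * e ^+ 2 + 2 / l * d ^+ 2.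
Proof.
move=> l0.
have : 0 <= (l / 2 * e + d) ^+ 2 by apply: sqr_ge0.
have -> : (l / 2 * e + d) ^+ 2 = l / 2 * (l / 2 * e ^+ 2 + 2 / l * d ^+ 2 + 2 * e * d).
  by field; rewrite gt_eqF.
rewrite pmulr_rge0 ?divr_gt0 //; lra.
Qed.

Lemma sq_split (a b s : R) : 0 < s -> (a + b) ^+ 2 <= (1 + s) * a ^+ 2 + (1 + s^-1) * b ^+ 2.
Proof.
move=> s0.
have : 0 <= (s * a - b) ^+ 2 / s by rewrite divr_ge0 ?sqr_ge0 // ltW.
have -> : (s * a - b) ^+ 2 / s = (1 + s) * a ^+ 2 + (1 + s^-1) * b ^+ 2 - (a + b) ^+ 2.
  by field; rewrite gt_eqF.
by rewrite subr_ge0.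
Qed.

End Ineq.

Section Perron.
Context {R : realType}.

Lemma connect_prop (T : finType) (r : rel T) (P : pred T) :
  (forall x y, r x y -> P x -> P y) -> forall a b, connect r a b -> P a -> P b.
Proof.
move=> H a b /connectP [p pth ->]; elim: p a pth => //= y p IH a /andP [rxy pth] Pa.
exact: IH pth (H _ _ rxy Pa).
Qed.

Lemma fixed_prop m (A : 'I_m -> 'I_m -> R) (g : 'I_m -> R) (r : rel 'I_m) :
  (forall j k, 0 <= A j k) -> (forall j, 0 <= g j) ->
  (forall k, g k = \sum_j g j * A j k) ->
  (forall x y, r x y -> 0 < A x y) -> (forall a b, connect r a b) ->
  forall a b, 0 < g a -> 0 < g b.
Proof.
move=> A0 g0 gf rp con a b.
apply: (connect_prop (P := fun x => 0 < g x)) (con a b) => x y rxy gx /=.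
rewrite gf (bigD1 x) //=; apply: (lt_le_trans (y := g x * A x y)).
  by rewrite mulr_gt0 // rp.
rewrite lerDl; apply: sumr_ge0 => j _; exact: mulr_ge0.
Qed.

Lemma perron m (A : 'I_m -> 'I_m -> R) (w : 'I_m -> R) (r : rel 'I_m) :
  (forall j k, 0 <= A j k) -> (forall j, \sum_k A j k = 1) ->
  (forall k, w k = \sum_j w j * A j k) -> 0 < \sum_j w j ->
  (forall x y, r x y -> 0 < A x y) -> (forall a b, connect r a b) ->
  forall k, 0 < w k.
Proof.
move=> A0 A1 wf ws rp con.
set z := fun k => `|w k|.
have zle : forall k, z k <= \sum_j z j * A j k.
  move=> k; rewrite /z {1}wf; apply: (le_trans (ler_norm_sum _ _ _)).
  by apply: ler_sum => j _; rewrite normrM (ger0_norm (A0 j k)).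
have zsum : \sum_k (\sum_j z j * A j k - z k) = 0.
  rewrite sumrB exchange_big /=.
  rewrite (eq_bigr z) ?subrr // => j _; by rewrite -mulr_sumr A1 mulr1.
have zeq : forall k, z k = \sum_j z j * A j k.
  move=> k; apply/eqP; rewrite eq_sym -subr_eq0; apply/eqP.
  move/eqP: zsum; rewrite psumr_eq0 => [/allP H|i _]; last by rewrite subr_ge0.
  by apply/eqP; apply: H; rewrite mem_index_enum.
set wm := fun k => z k - w k.
have wm0 : forall k, 0 <= wm k by move=> k; rewrite subr_ge0 ler_norm.
have wmf : forall k, wm k = \sum_j wm j * A j k.
  move=> k; rewrite /wm zeq {1}wf -sumrB; apply: eq_bigr => j _; ring.
have wmz : forall k, wm k = 0.
  move=> k; apply/eqP; rewrite eq_le wm0 andbT; apply/negP => /negP; rewrite -ltNge => wk.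
  have allneg : forall j, w j < 0.
    move=> j; have := fixed_prop A0 wm0 wmf rp con j wk.
    rewrite /wm /z subr_gt0; case: (ltP (w j) 0) => // h; rewrite ger0_norm //; lra.
  have : \sum_j w j < 0.
    rewrite (bigD1 k) //=.
    have : \sum_(j < m | j != k) w j <= 0 by apply: sumr_le0 => j _; apply: ltW.
    have := allneg k; lra.
  lra.
have wz : forall k, w k = z k by move=> j; have := wmz j; rewrite /wm; lra.
have g0 : forall k, 0 <= w k by move=> j; rewrite wz normr_ge0.
have [k0 k0p] : exists k0, 0 < w k0.
  apply/not_existsP => H; move: ws; apply/negP; rewrite -leNgt.
  by apply: sumr_le0 => j _; rewrite leNgt; apply/negP => hj; apply: (H j).
move=> k; have := fixed_prop A0 g0 wf rp con; apply; exact: k0p.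
Qed.

End Perron.

Unset Implicit Arguments.
Section Main.
Context {R : realType} (N : nat) (n : 'I_N -> nat).
Local Notation agt := (agent N n).
Variables (E : rel agt) (f : agt -> (agt -> R) -> R) (lip : agt -> R) (l : R)
  (Rm Cm : forall i : 'I_N, 'M[R]_(n i))
  (u : forall i : 'I_N, 'rV[R]_(n i)) (v : forall i : 'I_N, 'cV[R]_(n i))
  (ys : 'I_N -> R) (alpha : R)
  (x : nat -> agt -> R) (xi : nat -> agt -> agt -> R)
  (psi : nat -> forall a : agt, 'I_(n (tag a)) -> R).
Hypotheses (hn : forall i, (0 < n i)%N)
  (hEi : forall i : 'I_N, strongly_connected [rel j m : 'I_(n i) | E (ag i j) (ag i m)])
  (hR : forall i (j m : 'I_(n i)),
     if (m == j) || E (ag i m) (ag i j) then 0 < Rm i j m else Rm i j m == 0)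
  (hR1 : forall i (j : 'I_(n i)), \sum_(m < n i) Rm i j m = 1)
  (hC : forall i (j m : 'I_(n i)),
     if (m == j) || E (ag i j) (ag i m) then 0 < Cm i m j else Cm i m j == 0)
  (hC1 : forall i (j : 'I_(n i)), \sum_(m < n i) Cm i m j = 1)
  (hu : forall i, u i *m Rm i = u i /\ \sum_(j < n i) u i 0 j = (n i)%:R)
  (hv : forall i, Cm i *m v i = v i /\ \sum_(j < n i) v i j 0 = (n i)%:R)
  (htr : trajectory E f Rm Cm alpha x xi psi)
  (hA2 : forall a, convex_fun (f a) /\ C2 (f a) /\ grad_lipschitz (f a) (lip a))
  (hnash : nash_eq f ys) (hl : 0 < l) (ha : 0 < alpha).

Lemma hp a p y : has_partial (f a) p y.
Proof. by have [_ [[_ H _ _ _] _]] := hA2 a; apply: H. Qed.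
Lemma hc a p : fcontinuous (partial (f a) p).
Proof. by have [_ [[_ _ H _ _] _]] := hA2 a; apply: H. Qed.

Lemma lipsq a y z : \sum_(p : agt) (partial (f a) p y - partial (f a) p z) ^+ 2
  <= lip a ^+ 2 * \sum_(p : agt) (y p - z p) ^+ 2.
Proof.
have [_ [_ H]] := hA2 a; have := H y z; rewrite /sqnorm.
set L := \sum_p _; set Rr := \sum_p _ => h.
have L0 : 0 <= L by apply: sumr_ge0 => p _; apply: sqr_ge0.
have R0 : 0 <= Rr by apply: sumr_ge0 => p _; apply: sqr_ge0.
rewrite -(sqr_sqrtr L0) -(sqr_sqrtr R0) -exprMn; apply: sq_le_of_norm.
by rewrite ger0_norm ?sqrtr_ge0.
Qed.

Lemma sum_agent (F : agt -> R) : \sum_(a : agt) F a = \sum_(i < N) \sum_(j < n i) F (ag i j).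
Proof.
rewrite (sig_big_dep xpredT (fun _ => xpredT) (fun i (j : 'I_(n i)) => F (ag i j))) /=.
by apply: eq_bigr => -[i j].
Qed.

Lemma u_pos i j : 0 < u i 0 j.
Proof.
apply: (@perron _ _ (fun j m => Rm i j m) (fun j => u i 0 j)
   [rel x y | E (ag i y) (ag i x)]).
- by move=> j' m; have := hR i j' m; case: ifP => _; [move/ltW|move/eqP ->].
- exact: hR1 i.
- by move=> m; have := (hu i).1 => /matrixP /(_ 0 m); rewrite mxE => <-.
- by rewrite (hu i).2 ltr0n.
- by move=> a b /= h; have := hR i a b; rewrite h orbT.
- move=> a b; have := connect_rev [rel j m : 'I_(n i) | E (ag i j) (ag i m)] a b.
  by move=> /= ->; exact: hEi i b a.
Qed.

Lemma v_pos i j : 0 < v i j 0.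
Proof.
apply: (@perron _ _ (fun m j => Cm i j m) (fun j => v i j 0)
   [rel x y | E (ag i x) (ag i y)]).
- by move=> j' m; have := hC i j' m; case: ifP => _; [move/ltW|move/eqP ->].
- exact: hC1 i.
- move=> m; have := (hv i).1 => /matrixP /(_ m 0); rewrite mxE => <-.
  by apply: eq_bigr => j' _; rewrite mulrC.
- by rewrite (hv i).2 ltr0n.
- by move=> a b /= h; have := hC i a b; rewrite h orbT.
- move=> a b; exact: hEi i a b.
Qed.

Lemma uv_pos i : 0 < uv u v i.
Proof.
rewrite /uv mxE; have := hn i; case: (n i) (u i) (v i) (@u_pos i) (@v_pos i) => // m ui vi up vp _.
rewrite big_ord_recl; apply: ltr_pwDl; first by rewrite mulr_gt0.
by apply: sumr_ge0 => j _; rewrite mulr_ge0 // ltW.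
Qed.

Lemma track k i (m : 'I_(n i)) :
  \sum_(j < n i) psi k (ag i j) m =
  \sum_(j < n i) partial (f (ag i j)) (ag i m) (xi k (ag i j)).
Proof.
have [T0 Tx Txi Tpsi] := htr.
elim: k => [|k IH]; first by apply: eq_bigr => j _; rewrite T0.
rewrite (eq_bigr (fun j => \sum_(m0 < n i) Cm i j m0 * psi k (ag i m0) m
   + partial (f (ag i j)) (ag i m) (xi k.+1 (ag i j))
   - partial (f (ag i j)) (ag i m) (xi k (ag i j)))); last by move=> j _; rewrite Tpsi.
rewrite sumrB big_split /= exchange_big /=.
rewrite (eq_bigr (fun m0 => psi k (ag i m0) m)); last first.
  by move=> m0 _; rewrite -mulr_suml (hC1 i) mul1r.
by rewrite IH addrC addrK.
Qed.

Definition S k i := \sum_(j < n i) u i 0 j * \sum_(m < n i) psi k (ag i j) m.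

Lemma xbar_upd k i :
  xbar u (x k.+1) i = xbar u (x k) i - alpha / (n i)%:R ^+ 2 * S k i.
Proof.
have [T0 Tx Txi Tpsi] := htr.
have n0 : (n i)%:R != 0 :> R by rewrite pnatr_eq0 -lt0n hn.
rewrite /xbar /S.
rewrite (eq_bigr (fun j => u i 0 j * (\sum_(m < n i) Rm i j m * x k (ag i m))
   - alpha / (n i)%:R * (u i 0 j * \sum_(m < n i) psi k (ag i j) m))); last first.
  by move=> j _; rewrite Tx /=; ring.
rewrite sumrB -mulr_sumr.
have -> : \sum_(j < n i) u i 0 j * (\sum_(m < n i) Rm i j m * x k (ag i m))
   = \sum_(m < n i) u i 0 m * x k (ag i m).
  rewrite (eq_bigr (fun j => \sum_(m < n i) u i 0 j * Rm i j m * x k (ag i m))); last first.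
    by move=> j _; rewrite mulr_sumr; apply: eq_bigr => m _; rewrite mulrA.
  rewrite exchange_big /=; apply: eq_bigr => m _.
  rewrite -mulr_suml; congr (_ * _).
  by have := (hu i).1 => /matrixP /(_ 0 m); rewrite mxE.
by field.
Qed.

Lemma sub_sum i (F : agt -> R) : (forall p, 0 <= F p) ->
  \sum_(l < n i) F (ag i l) <= \sum_(p : agt) F p.
Proof.
move=> F0; rewrite sum_agent (bigD1 i) //= lerDl.
by apply: sumr_ge0 => i' _; apply: sumr_ge0 => j _.
Qed.

Lemma blockdiff i (Y : 'I_(n i) -> agt -> R) (Z : agt -> R) :
  (\sum_(j < n i) \sum_(m < n i)
     (partial (f (ag i j)) (ag i m) (Y j) - partial (f (ag i j)) (ag i m) Z)) ^+ 2
  <= sumlip2 lip i * \sum_(j < n i) ((n i)%:R * \sum_(p : agt) (Y j p - Z p) ^+ 2).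
Proof.
apply: cs_gen.
  by move=> j; rewrite mulr_ge0 // sumr_ge0 // => p _; apply: sqr_ge0.
move=> j; apply: (le_trans (sq_sum_le _)).
rewrite mulrCA ler_wpM2l //; apply: le_trans (lipsq _ _ _).
by apply: (sub_sum i (fun p => (partial (f (ag i j)) p (Y j) - partial (f (ag i j)) p Z) ^+ 2))
  => p; apply: sqr_ge0.
Qed.

Definition Aq k i := \sum_(j < n i) u i 0 j *
  \sum_(l0 < n i) (psi k (ag i j) l0 - v i j 0 * psibar (psi k) l0).
Definition cq k i := \sum_(l0 < n i) psibar (psi k) l0.
Definition Gq k i := \sum_(j < n i) \sum_(m < n i) partial (f (ag i j)) (ag i m) (xi k (ag i j)).
Definition Epsi k i := \sum_(j < n i) \sum_(l0 < n i)
  (psi k (ag i j) l0 - v i j 0 * psibar (psi k) l0) ^+ 2.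
Definition Exi k i := \sum_(j < n i) \sum_(p : agt) (xi k (ag i j) p - xbar u (x k) (tag p)) ^+ 2.

Lemma S_dec k i : S k i = Aq k i + uv u v i * cq k i.
Proof.
rewrite /Aq /uv mxE.
rewrite (eq_bigr (fun j => u i 0 j * \sum_(m < n i) psi k (ag i j) m
   - (u i 0 j * v i j 0) * cq k i)); last first.
  by move=> j _; rewrite sumrB -mulr_sumr /cq; ring.
by rewrite sumrB -mulr_suml subrK.
Qed.

Lemma c_G k i : (n i)%:R * cq k i = Gq k i.
Proof.
have n0 : (n i)%:R != 0 :> R by rewrite pnatr_eq0 -lt0n hn.
rewrite /cq /psibar -mulr_sumr mulVKf //.
rewrite (eq_bigr (fun m => \sum_(j < n i) partial (f (ag i j)) (ag i m) (xi k (ag i j)))).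
  by rewrite /Gq exchange_big.
by move=> m _; rewrite track.
Qed.

Lemma Epsi_ge0 k i : 0 <= Epsi k i.
Proof. by apply: sumr_ge0 => j _; apply: sumr_ge0 => m _; apply: sqr_ge0. Qed.
Lemma Exi_ge0 k i : 0 <= Exi k i.
Proof. by apply: sumr_ge0 => j _; apply: sumr_ge0 => m _; apply: sqr_ge0. Qed.

Lemma L1 k i : (Gq k i - Qmap f (xbar u (x k)) i) ^+ 2
  <= (n i)%:R * sumlip2 lip i * Exi k i.
Proof.
rewrite (Qmap_val _ _ (fun a p y => hp a p y) hc) /Gq.
rewrite -sumrB (eq_bigr (fun j => \sum_(m < n i) (partial (f (ag i j)) (ag i m) (xi k (ag i j))
   - partial (f (ag i j)) (ag i m) (fun a => xbar u (x k) (tag a))))); last first.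
  by move=> j _; rewrite sumrB.
apply: le_trans (blockdiff _ _ _) _.
by rewrite -mulr_sumr mulrCA mulrA.
Qed.

Lemma L2 k i : Aq k i ^+ 2 <= rnorm_sq (u i) * ((n i)%:R * Epsi k i).
Proof.
rewrite /Aq /Epsi mulr_sumr; apply: cs_gen.
  by move=> j; rewrite mulr_ge0 // sumr_ge0 // => m _; apply: sqr_ge0.
by move=> j; rewrite exprMn ler_wpM2l ?sqr_ge0 // sq_sum_le.
Qed.

Definition Mx : R := (\max_(k0 < N) n k0)%:R.

Lemma n_le_M i : (n i)%:R <= Mx.
Proof. by rewrite /Mx ler_nat; apply: (leq_bigmax_cond (F := n) i). Qed.

Lemma n_gt0 i : 0 < (n i)%:R :> R.
Proof. by rewrite ltr0n hn. Qed.

Lemma Xsum k : \sum_(p : agt) (xbar u (x k) (tag p) - ys (tag p)) ^+ 2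
  <= Mx * e_xbar_sq u ys (x k).
Proof.
rewrite sum_agent /e_xbar_sq mulr_sumr; apply: ler_sum => i _.
rewrite (eq_bigr (fun _ => (xbar u (x k) i - ys i) ^+ 2)) // sumr_const card_ord -mulr_natl ler_wpM2r ?sqr_ge0 //; exact: n_le_M.
Qed.

Lemma Ex_ge0 k : 0 <= e_xbar_sq u ys (x k).
Proof. by apply: sumr_ge0 => i _; apply: sqr_ge0. Qed.

Lemma hc2 k i : cq k i ^+ 2 <=
  sumlip2 lip i * ((n i)%:R^-1 + Mx) * (Exi k i + e_xbar_sq u ys (x k)).
Proof.
set Ex := e_xbar_sq u ys (x k).
set nn := (n i)%:R; have nn0 : 0 < nn := n_gt0 i.
have M0 : 0 < Mx := lt_le_trans nn0 (n_le_M i).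
set s := nn * Mx; have s0 : 0 < s by rewrite mulr_gt0.
set Ys := fun a : agt => ys (tag a).
set Xb := fun a : agt => xbar u (x k) (tag a).
have Gys : Qmap f ys i = \sum_(j < n i) \sum_(m < n i) partial (f (ag i j)) (ag i m) Ys.
  exact: (Qmap_val _ _ (fun a p y => hp a p y) hc).
have G0 : Qmap f ys i = 0 by apply: Qmap_nash => //; [exact: hp | exact: hc].
have H1 : Gq k i ^+ 2 <= sumlip2 lip i * \sum_(j < n i) (nn * \sum_(p : agt) (xi k (ag i j) p - Ys p) ^+ 2).
  have -> : Gq k i = Gq k i - Qmap f ys i by rewrite G0 subr0.
  rewrite Gys /Gq -sumrB (eq_bigr (fun j => \sum_(m < n i) (partial (f (ag i j)) (ag i m) (xi k (ag i j))
   - partial (f (ag i j)) (ag i m) Ys))); last by move=> j _; rewrite sumrB.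
  exact: blockdiff.
have H2 : \sum_(j < n i) (nn * \sum_(p : agt) (xi k (ag i j) p - Ys p) ^+ 2)
   <= nn * ((1 + s) * Exi k i + nn * ((1 + s^-1) * (Mx * Ex))).
  rewrite -mulr_sumr ler_pM2l //.
  apply: (le_trans (y := \sum_(j < n i) ((1 + s) * \sum_(p : agt) (xi k (ag i j) p - Xb p) ^+ 2
        + (1 + s^-1) * \sum_(p : agt) (Xb p - Ys p) ^+ 2))).
    apply: ler_sum => j _; rewrite !mulr_sumr -big_split /=; apply: ler_sum => p _.
    have -> : xi k (ag i j) p - Ys p = (xi k (ag i j) p - Xb p) + (Xb p - Ys p) by ring.
    exact: sq_split.
  rewrite big_split /= -mulr_sumr sumr_const card_ord -mulr_natl.
  apply: lerD; first by rewrite /Exi.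
  rewrite ler_pM2l //; apply: ler_wpM2l; first by rewrite addr_ge0 // invr_ge0 ltW.
  exact: Xsum.
have H3 : (nn * cq k i) ^+ 2 <= nn ^+ 2 * (sumlip2 lip i * (nn^-1 + Mx) * (Exi k i + Ex)).
  rewrite c_G; apply: (le_trans H1).
  have sl0 : 0 <= sumlip2 lip i by apply: sumr_ge0 => j _; apply: sqr_ge0.
  apply: (le_trans (ler_wpM2l sl0 H2)); rewrite le_eqVlt; apply/orP; left; apply/eqP.
  by rewrite /s; field; rewrite !gt_eqF.
by move: H3; rewrite exprMn ler_pM2l // exprn_gt0.
Qed.

Lemma L3 k i : S k i ^+ 2 <=
  rnorm_sq (u i) * b0 v lip i * (Epsi k i + Exi k i + e_xbar_sq u ys (x k)).
Proof.
set Ex := e_xbar_sq u ys (x k).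
have nn0 := n_gt0 i.
have M0 : 0 < Mx := lt_le_trans nn0 (n_le_M i).
set K := ((n i)%:R^-1 + Mx) * cnorm_sq (v i) * sumlip2 lip i.
have u0 : 0 <= rnorm_sq (u i) by apply: sumr_ge0 => j _; apply: sqr_ge0.
have v0 : 0 <= cnorm_sq (v i) by apply: sumr_ge0 => j _; apply: sqr_ge0.
have sl0 : 0 <= sumlip2 lip i by apply: sumr_ge0 => j _; apply: sqr_ge0.
have K0 : 0 <= K by rewrite !mulr_ge0 // addr_ge0 // invr_ge0 ltW.
have huv : uv u v i ^+ 2 <= rnorm_sq (u i) * cnorm_sq (v i).
  by rewrite /uv mxE; apply: (cs (fun j => u i 0 j) (fun j => v i j 0)).
have hb : (uv u v i * cq k i) ^+ 2 <= rnorm_sq (u i) * K * (Exi k i + Ex).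
  rewrite exprMn; apply: (le_trans (ler_pM (sqr_ge0 _) (sqr_ge0 _) huv (hc2 k i))).
  by rewrite le_eqVlt; apply/orP; left; apply/eqP; rewrite /K /Ex; ring.
rewrite S_dec.
have L2' : Aq k i ^+ 2 <= rnorm_sq (u i) * (n i)%:R * Epsi k i by rewrite -mulrA; exact: L2.
have H := comb (mulr_ge0 u0 (ltW nn0)) (mulr_ge0 u0 K0) (Epsi_ge0 k i)
  (addr_ge0 (Exi_ge0 k i) (Ex_ge0 k)) L2' hb.
apply: (le_trans H).
by rewrite le_eqVlt; apply/orP; left; apply/eqP; rewrite /b0 -/K /Ex; ring.
Qed.

Lemma Tbound k i :
  (n i)%:R ^+ 3 / (alpha * uv u v i) *
    ((xbar u (x k.+1) i - ys i) ^+ 2 - (xbar u (x k) i - ys i) ^+ 2)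
  <= - 2 * (xbar u (x k) i - ys i) * Qmap f (xbar u (x k)) i
     + l * (xbar u (x k) i - ys i) ^+ 2
     + 2 / l * ((n i)%:R ^+ 3 * rnorm_sq (u i) / (uv u v i) ^+ 2) * Epsi k i
     + 2 / l * ((n i)%:R * sumlip2 lip i) * Exi k i
     + alpha * b1 u v lip i * (Epsi k i + Exi k i + e_xbar_sq u ys (x k)).
Proof.
set Ex := e_xbar_sq u ys (x k).
set e := xbar u (x k) i - ys i.
set Q := Qmap f (xbar u (x k)) i.
set nn := (n i)%:R; have nn0 : 0 < nn := n_gt0 i.
set w := uv u v i; have w0 : 0 < w := uv_pos i.
set A := Aq k i; set G := Gq k i.
set W := Epsi k i + Exi k i + Ex.
have EqS : S k i = A + w * cq k i := S_dec k i.
have EqG : nn * cq k i = G := c_G k i.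
have Eq : nn ^+ 3 / (alpha * w) * ((xbar u (x k.+1) i - ys i) ^+ 2 - e ^+ 2)
   = - 2 * e * Q + (- 2 * e * (G - Q)) + (- 2 * e * (nn * A / w))
     + alpha / (nn * w) * S k i ^+ 2.
  rewrite xbar_upd -/e.
  have -> : xbar u (x k) i - alpha / nn ^+ 2 * S k i - ys i = e - alpha / nn ^+ 2 * S k i.
    by rewrite /e; ring.
  rewrite -EqG; rewrite [in X in _ = _ + X]EqS EqS.
  by field; rewrite !gt_eqF.
rewrite Eq.
have y1 := young e (G - Q) hl.
have y2 := young e (nn * A / w) hl.
have l1 : 2 / l * (G - Q) ^+ 2 <= 2 / l * (nn * sumlip2 lip i) * Exi k i.
  rewrite -[in X in _ <= X]mulrA; apply: ler_wpM2l; first by rewrite divr_ge0 ?ltW.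
  exact: L1.
have l2 : 2 / l * (nn * A / w) ^+ 2 <= 2 / l * (nn ^+ 3 * rnorm_sq (u i) / w ^+ 2) * Epsi k i.
  rewrite -[in X in _ <= X]mulrA; apply: ler_wpM2l; first by rewrite divr_ge0 ?ltW.
  have -> : (nn * A / w) ^+ 2 = nn ^+ 2 / w ^+ 2 * A ^+ 2 by rewrite !exprMn exprVn; ring.
  apply: (le_trans (ler_wpM2l _ (L2 k i))); first by rewrite divr_ge0 ?sqr_ge0.
  by rewrite le_eqVlt; apply/orP; left; apply/eqP; field; rewrite gt_eqF.
have l3 : alpha / (nn * w) * S k i ^+ 2 <= alpha * b1 u v lip i * W.
  apply: (le_trans (ler_wpM2l _ (L3 k i))); first by rewrite divr_ge0 ?ltW ?mulr_gt0.
  by rewrite le_eqVlt; apply/orP; left; apply/eqP; rewrite /W /Ex /b1 -/nn -/w; field; rewrite !gt_eqF.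
lra.
Qed.

Lemma main_ineq k :
  (forall a b : 'I_N -> R,
     l * \sum_(i < N) (a i - b i) ^+ 2
       <= \sum_(i < N) (a i - b i) * (Qmap f a i - Qmap f b i)) ->
    Vxbar u v alpha ys (x k.+1) - Vxbar u v alpha ys (x k)
      <= - l * e_xbar_sq u ys (x k)
         + beta_xpsi l u v * e_psi_sq v (psi k)
         + beta_xxi l lip * e_xi_sq u (x k) (xi k)
         + alpha * \big[Num.max/0]_(i < N) b1 u v lip i
             * (e_psi_sq v (psi k) + e_xi_sq u (x k) (xi k)
                + N%:R * e_xbar_sq u ys (x k)).
Proof.
move=> hA3.
set Ex := e_xbar_sq u ys (x k).
set Bp := \big[Num.max/0]_(i < N) ((n i)%:R ^+ 3 * rnorm_sq (u i) / (uv u v i) ^+ 2).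
set Bx := \big[Num.max/0]_(i < N) ((n i)%:R * sumlip2 lip i).
set Mb := \big[Num.max/0]_(i < N) b1 u v lip i.
have EP : e_psi_sq v (psi k) = \sum_(i < N) Epsi k i by [].
have EX : e_xi_sq u (x k) (xi k) = \sum_(i < N) Exi k i by rewrite /e_xi_sq sum_agent.
have l2 : 0 < 2 / l by rewrite divr_gt0.
rewrite /Vxbar -sumrB.
apply: (le_trans (y := \sum_(i < N) (- 2 * (xbar u (x k) i - ys i) * Qmap f (xbar u (x k)) i
     + l * (xbar u (x k) i - ys i) ^+ 2 + 2 / l * Bp * Epsi k i + 2 / l * Bx * Exi k i
     + alpha * Mb * (Epsi k i + Exi k i + Ex)))).
  apply: ler_sum => i _; rewrite -mulrBr; apply: (le_trans (Tbound k i)).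
  have f1 : 2 / l * ((n i)%:R ^+ 3 * rnorm_sq (u i) / (uv u v i) ^+ 2) * Epsi k i
      <= 2 / l * Bp * Epsi k i.
    apply: ler_wpM2r; first exact: Epsi_ge0.
    apply: ler_wpM2l; first exact: ltW.
    exact: le_bigmax.
  have f2 : 2 / l * ((n i)%:R * sumlip2 lip i) * Exi k i <= 2 / l * Bx * Exi k i.
    apply: ler_wpM2r; first exact: Exi_ge0.
    apply: ler_wpM2l; first exact: ltW.
    exact: le_bigmax.
  have f3 : alpha * b1 u v lip i * (Epsi k i + Exi k i + Ex) <= alpha * Mb * (Epsi k i + Exi k i + Ex).
    apply: ler_wpM2r; first by rewrite !addr_ge0 ?Epsi_ge0 ?Exi_ge0 ?Ex_ge0.
    apply: ler_wpM2l; first exact: ltW.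
    exact: le_bigmax.
  rewrite -/Ex; lra.
have hQ : l * Ex <= \sum_(i < N) (xbar u (x k) i - ys i) * Qmap f (xbar u (x k)) i.
  apply: (le_trans (hA3 (xbar u (x k)) ys)); apply: ler_sum => i _.
  rewrite (Qmap_nash i (fun a p y => hp a p y) hc hnash) subr0 //.
rewrite !big_split /= -!mulr_sumr -EP -EX.
rewrite !big_split /= sumr_const card_ord -/Ex.
have -> : \sum_(i < N) - 2 * (xbar u (x k) i - ys i) * Qmap f (xbar u (x k)) i
  = - 2 * \sum_(i < N) (xbar u (x k) i - ys i) * Qmap f (xbar u (x k)) i.
  by rewrite mulr_sumr; apply: eq_bigr => i _; rewrite mulrA.
have E1 : \sum_(i < N) (xbar u (x k) i - ys i) ^+ 2 = Ex by [].
have E2 : Ex *+ N = N%:R * Ex by rewrite mulr_natl.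
rewrite E1 E2 -EP -EX /beta_xpsi /beta_xxi -/Bp -/Bx -/Mb.
lra.
Qed.

End Main.
Print Assumptions hc2.

End Helpers.
Import Helpers.
Unset Implicit Arguments. Set Strict Implicit. Set Printing Implicit Defensive.
Local Open Scope ring_scope.

Theorem lemma2 (R : realType) (N : nat) (n : 'I_N -> nat)
  (E : rel (agent N n))
  (f : agent N n -> (agent N n -> R) -> R) (lip : agent N n -> R) (l : R)
  (Rm Cm : forall i : 'I_N, 'M[R]_(n i))
  (u : forall i : 'I_N, 'rV[R]_(n i)) (v : forall i : 'I_N, 'cV[R]_(n i))
  (ys : 'I_N -> R) (alpha : R)
  (x : nat -> agent N n -> R) (xi : nat -> agent N n -> agent N n -> R)
  (psi : nat -> forall a : agent N n, 'I_(n (tag a)) -> R) :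
  (* coalitions are nonempty *)
  (forall i, (0 < n i)%N) ->
  (* (A1) *)
  strongly_connected E ->
  (forall i : 'I_N, strongly_connected [rel j m : 'I_(n i) | E (ag i j) (ag i m)]) ->
  (* (A2) *)
  (forall a, convex_fun (f a) /\ C2 (f a) /\ grad_lipschitz (f a) (lip a)) ->
  (* (A3) *)
  0 < l ->
  (forall a b : 'I_N -> R,
     l * \sum_(i < N) (a i - b i) ^+ 2
       <= \sum_(i < N) (a i - b i) * (Qmap f a i - Qmap f b i)) ->
  (* y* is the Nash equilibrium *)
  nash_eq f ys ->
  (* weights R_i (row stochastic on in-neighbours + self) *)
  (forall i (j m : 'I_(n i)),
     if (m == j) || E (ag i m) (ag i j) then 0 < Rm i j m else Rm i j m == 0) ->
  (forall i (j : 'I_(n i)), \sum_(m < n i) Rm i j m = 1) ->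
  (* weights C_i: c_{im}^{ij} = Cm i m j (column stochastic on out-neighbours + self) *)
  (forall i (j m : 'I_(n i)),
     if (m == j) || E (ag i j) (ag i m) then 0 < Cm i m j else Cm i m j == 0) ->
  (forall i (j : 'I_(n i)), \sum_(m < n i) Cm i m j = 1) ->
  (* u_i, v_i *)
  (forall i, u i *m Rm i = u i /\ \sum_(j < n i) u i 0 j = (n i)%:R) ->
  (forall i, Cm i *m v i = v i /\ \sum_(j < n i) v i j 0 = (n i)%:R) ->
  0 < alpha ->
  trajectory E f Rm Cm alpha x xi psi ->
  forall k : nat,
    Vxbar u v alpha ys (x k.+1) - Vxbar u v alpha ys (x k)
      <= - l * e_xbar_sq u ys (x k)
         + beta_xpsi l u v * e_psi_sq v (psi k)
         + beta_xxi l lip * e_xi_sq u (x k) (xi k)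
         + alpha * \big[Num.max/0]_(i < N) b1 u v lip i
             * (e_psi_sq v (psi k) + e_xi_sq u (x k) (xi k)
                + N%:R * e_xbar_sq u ys (x k)).
Proof.
move=> hn hE hEi hA2 hl hA3 hnash hR hR1 hC hC1 hu hv ha htr k.
exact: (@main_ineq R N n E f lip l Rm Cm u v ys alpha x xi psi hn hEi hR hR1 hC hC1 hu hv htr hA2 hnash hl ha k hA3).
Qed.
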